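(* Let $T\in\mathbb{B}(\mathscr{H})$. Then \[ \omega^{2}(T)+\inf_{x\in\mathscr{H},\ \|x\|=1}\left\{\left|\langle |T||T^*|x,x\rangle-\langle |T|x,x\rangle\langle |T^*|x,x\rangle\right|\right\}\le\frac12\left\||T|^{2}+|T^*|^{2}\right\|. \]
   Context: $\mathbb{B}(\mathscr{H})$ is the algebra of bounded operators on a complex Hilbert space $\mathscr{H}$; $|T|=(T^*T)^{1/2}$, $|T^*|=(TT^* )^{1/2}$; $\omega(T)=\sup_{\|x\|=1}|\langle Tx,x\rangle|$ is the numerical radius, and $\|\cdot\|$ is the operator norm. *)

(* Defs.v *)
From HB Require Import structures.
From mathcomp Require Import all_boot all_order all_algebra.
From mathcomp Require Import all_classical all_reals.
From mathcomp Require Import complex.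

Set Implicit Arguments.
Unset Strict Implicit.
Unset Printing Implicit Defensive.

Import Order.TTheory GRing.Theory Num.Theory.
Local Open Scope ring_scope.
Local Open Scope classical_set_scope.

Section HilbertDefs.
Variables (R : realType) (V : lmodType R[i]) (ip : V -> V -> R[i]).

Definition cmod (z : R[i]) : R := Normc.normc z.

Definition is_inner_product : Prop :=
  [/\ forall (a : R[i]) (x y z : V), ip (a *: x + y) z = a * ip x z + ip y z,
      forall x y : V, ip y x = conjc (ip x y),
      forall x : V, 0 <= ip x x &
      forall x : V, ip x x = 0 -> x = 0].

Definition hnorm (x : V) : R := Num.sqrt (complex.Re (ip x x)).

Definition is_complete : Prop :=
  forall u : nat -> V,
    (forall e : R, 0 < e -> exists N, forall m n, (N <= m)%N -> (N <= n)%N ->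
        hnorm (u m - u n) < e) ->
    exists l : V, forall e : R, 0 < e -> exists N, forall n, (N <= n)%N ->
        hnorm (u n - l) < e.

Definition is_hilbert : Prop := is_inner_product /\ is_complete.

Definition is_bounded_op (T : V -> V) : Prop :=
  (forall (a : R[i]) (x y : V), T (a *: x + y) = a *: T x + T y) /\
  exists M : R, forall x, hnorm (T x) <= M * hnorm x.

Definition is_adjoint (T S : V -> V) : Prop :=
  forall x y : V, ip (T x) y = ip x (S y).

Definition is_positive_op (A : V -> V) : Prop :=
  is_bounded_op A /\ forall x, 0 <= ip (A x) x.

Definition is_pos_sqrt (A P : V -> V) : Prop :=
  is_positive_op A /\ forall x, A (A x) = P x.

Definition unit_sphere : set V := [set x | hnorm x = 1].

Definition numrad (T : V -> V) : R :=
  sup [set cmod (ip (T x) x) | x in unit_sphere].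

Definition opnorm (T : V -> V) : R :=
  sup [set hnorm (T x) | x in unit_sphere].

End HilbertDefs.

(* Main.v *)
Require Import Defs.
From HB Require Import structures.
From mathcomp Require Import all_boot all_order all_algebra.
From mathcomp Require Import all_classical all_reals.
From mathcomp Require Import complex.
From mathcomp Require Import ring lra.
Import Order.TTheory GRing.Theory Num.Theory.
Local Open Scope ring_scope.
Local Open Scope classical_set_scope.
Set Implicit Arguments.
Unset Strict Implicit.

Section Cm.
Variable R : realType.
Implicit Types z w : R[i].
Lemma cmod_sq z : cmod z ^+ 2 = complex.Re z ^+ 2 + complex.Im z ^+ 2.
Proof. case: z => a b; by rewrite /cmod /= sqr_sqrtr // addr_ge0 // sqr_ge0. Qed.
Lemma cmod_ge0 z : 0 <= cmod z.
Proof. case: z => a b; exact: sqrtr_ge0. Qed.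
Lemma cmod_conj z : cmod (conjc z) = cmod z.
Proof. case: z => a b; by rewrite /cmod /= sqrrN. Qed.
Lemma cmodM z w : cmod (z * w) = cmod z * cmod w.
Proof. exact: Normc.normcM. Qed.
Lemma mul_conj z : z * conjc z = (cmod z ^+ 2)%:C%C.
Proof. rewrite cmod_sq; case: z => a b /=. apply/eqP; rewrite eq_complex /=. apply/andP; split; apply/eqP; ring. Qed.
Lemma Re_le_cmod z : complex.Re z <= cmod z.
Proof.
case: z => a b; rewrite /cmod /=; apply: le_trans (ler_norm a) _.
rewrite -sqrtr_sqr; apply: ler_wsqrtr; by rewrite lerDl sqr_ge0.
Qed.
End Cm.

Lemma m1m1 (R : realType) : (-1 - 1 : R) != 0.
Proof. apply/eqP; lra. Qed.

Section Basics.
Variables (R : realType) (V : lmodType R[i]) (ip : V -> V -> R[i]).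
Hypothesis Hip : is_inner_product ip.

Lemma ipDl x y z : ip (x + y) z = ip x z + ip y z.
Proof. case: Hip => H _ _ _; by rewrite -[x]scale1r H mul1r scale1r. Qed.
Lemma ip0l z : ip 0 z = 0.
Proof. have h := ipDl 0 0 z; rewrite addr0 in h; apply: (addrI (ip 0 z)); by rewrite addr0 -h. Qed.
Lemma ipZl a x z : ip (a *: x) z = a * ip x z.
Proof. case: Hip => H _ _ _; by rewrite -[a *: x]addr0 H ip0l addr0. Qed.
Lemma ipC x y : ip y x = conjc (ip x y).
Proof. by case: Hip. Qed.
Lemma ipDr x y z : ip z (x + y) = ip z x + ip z y.
Proof. by rewrite ipC [ip z x]ipC [ip z y]ipC ipDl rmorphD. Qed.
Lemma ipZr a x z : ip z (a *: x) = conjc a * ip z x.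
Proof. by rewrite ipC [ip z x]ipC ipZl rmorphM. Qed.
Lemma ipNl x z : ip (- x) z = - ip x z.
Proof. by rewrite -scaleN1r ipZl mulN1r. Qed.
Lemma ipNr x z : ip z (- x) = - ip z x.
Proof. by rewrite -scaleN1r ipZr rmorphN rmorph1 mulN1r. Qed.
Lemma ip0r z : ip z 0 = 0.
Proof. by rewrite ipC ip0l rmorph0. Qed.
Lemma ipBl x y z : ip (x - y) z = ip x z - ip y z.
Proof. by rewrite ipDl ipNl. Qed.
Lemma ipBr x y z : ip z (x - y) = ip z x - ip z y.
Proof. by rewrite ipDr ipNr. Qed.
Lemma ipxx_ge0 x : 0 <= ip x x. Proof. by case: Hip. Qed.
Lemma ipxx_real x : ip x x = (complex.Re (ip x x))%:C%C.
Proof.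
have := ipxx_ge0 x; case: (ip x x) => a b; rewrite lecE /= => /andP[/eqP -> _] //.
Qed.

Definition nsq x := complex.Re (ip x x).
Lemma nsq_ge0 x : 0 <= nsq x.
Proof. have := ipxx_ge0 x; rewrite /nsq; case: (ip x x) => a b; by rewrite lecE /= => /andP[_ ->]. Qed.
Lemma ipxx x : ip x x = (nsq x)%:C%C.
Proof. exact: ipxx_real. Qed.
Lemma nsq_eq0 x : nsq x = 0 -> x = 0.
Proof. move=> h; case: Hip => _ _ _; apply; by rewrite ipxx h. Qed.
Lemma hnorm_ge0 x : 0 <= hnorm ip x. Proof. exact: sqrtr_ge0. Qed.
Lemma hnorm_sq x : hnorm ip x ^+ 2 = nsq x.
Proof. by rewrite /hnorm sqr_sqrtr // nsq_ge0. Qed.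


Lemma cs u w : cmod (ip u w) ^+ 2 <= nsq u * nsq w.
Proof.
have [w0|wn0] := eqVneq w 0.
  by rewrite w0 ip0r cmod_sq /= expr2 mul0r addr0 mulr_ge0 // nsq_ge0.
have rpos : 0 < nsq w.
  rewrite lt_def nsq_ge0 andbT; apply/eqP => /nsq_eq0 h; by rewrite h eqxx in wn0.
set c := ip u w; set r := nsq w; set s := nsq u; set n := cmod c ^+ 2.
pose v := r%:C%C *: u - c *: w.
have E : ip v v = (r * (r * s - n))%:C%C.
  rewrite /v !ipBl !ipBr !ipZl !ipZr !ipxx -/r -/s [ip w u]ipC -/c conjc_real.
  rewrite rmorphM rmorphB /= rmorphM /= -mul_conj -/c. ring.
have := nsq_ge0 v; rewrite /nsq E /= => h.
have : 0 <= r * s - n by rewrite -(pmulr_rge0 _ rpos).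
by rewrite subr_ge0 mulrC.
Qed.

Lemma cs_h u w : cmod (ip u w) <= hnorm ip u * hnorm ip w.
Proof.
rewrite -ler_sqr ?nnegrE ?cmod_ge0 ?mulr_ge0 ?hnorm_ge0 // exprMn !hnorm_sq; exact: cs.
Qed.

Lemma ReD (a b : R[i]) : complex.Re (a + b) = complex.Re a + complex.Re b.
Proof. by case: a; case: b. Qed.
Lemma ReN (a : R[i]) : complex.Re (- a) = - complex.Re a.
Proof. by case: a. Qed.
Lemma ReRM (r : R) (a : R[i]) : complex.Re (r%:C%C * a) = r * complex.Re a.
Proof. case: a => ? ? /=; by rewrite mul0r subr0. Qed.

Lemma hnormD u v : hnorm ip (u + v) <= hnorm ip u + hnorm ip v.
Proof.
rewrite -ler_sqr ?nnegrE ?addr_ge0 ?hnorm_ge0 // hnorm_sq sqrrD !hnorm_sq.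
rewrite /nsq ipDl !ipDr !ReD -/(nsq u) -/(nsq v).
have h1 := le_trans (Re_le_cmod (ip u v)) (cs_h u v).
have h2 := le_trans (Re_le_cmod (ip v u)) (cs_h v u).
rewrite (mulrC (hnorm ip v)) in h2. lra.
Qed.

Lemma nsqZ a x : nsq (a *: x) = cmod a ^+ 2 * nsq x.
Proof. by rewrite /nsq ipZl ipZr mulrA mul_conj ipxx ReRM /=. Qed.
Lemma hnormZ a x : hnorm ip (a *: x) = cmod a * hnorm ip x.
Proof.
rewrite (_ : hnorm ip (a *: x) = Num.sqrt (nsq (a *: x))) //.
by rewrite nsqZ sqrtrM ?sqr_ge0 // sqrtr_sqr ger0_norm ?cmod_ge0.
Qed.

Section Lin.
Variable (T : V -> V) (HT : is_bounded_op ip T).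
Lemma linD x y : T (x + y) = T x + T y.
Proof. have [H _] := HT; by rewrite -[x]scale1r H !scale1r. Qed.
Lemma lin0 : T 0 = 0.
Proof. have h := linD 0 0; rewrite addr0 in h; apply: (addrI (T 0)); by rewrite addr0 -h. Qed.
Lemma linZ a x : T (a *: x) = a *: T x.
Proof. have [H _] := HT; by rewrite -[a *: x]addr0 H lin0 addr0. Qed.
Lemma linN x : T (- x) = - T x.
Proof. by rewrite -scaleN1r linZ scaleN1r. Qed.
Lemma linB x y : T (x - y) = T x - T y.
Proof. by rewrite linD linN. Qed.
End Lin.

Lemma ge0_real (z : R[i]) : 0 <= z -> z = (complex.Re z)%:C%C.
Proof. case: z => a b; rewrite lecE /= => /andP[/eqP -> _] //. Qed.

Lemma sesq_zero (f : V -> V -> R[i]) :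
  (forall x y z, f (x + y) z = f x z + f y z) ->
  (forall a x z, f (a *: x) z = a * f x z) ->
  (forall x y z, f z (x + y) = f z x + f z y) ->
  (forall a x z, f z (a *: x) = conjc a * f z x) ->
  (forall x, f x x = 0) -> forall x y, f x y = 0.
Proof.
move=> fDl fZl fDr fZr f0 x y.
have e1 := f0 (x + y); rewrite fDl !fDr !f0 add0r addr0 in e1.
have e2 := f0 (x + 'i%C *: y); rewrite fDl !fDr !fZl !fZr !f0 !mulr0 add0r addr0 in e2.
have hq : f y x = - f x y by apply/eqP; rewrite -addr_eq0 addrC e1.
rewrite hq mulrN -mulrBl in e2.
move/eqP: e2; rewrite mulf_eq0 => /orP[|/eqP //].
move=> /eqP h; have := congr1 (@complex.Im R) h; rewrite /= => /eqP; by rewrite (negPf (m1m1 R)).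
Qed.

Lemma pos_selfadj A : is_positive_op ip A -> forall x y, ip (A x) y = ip x (A y).
Proof.
move=> [HA Hpos] x y; apply/eqP; rewrite -subr_eq0; apply/eqP.
apply: (@sesq_zero (fun x y => ip (A x) y - ip x (A y))) => [u v w|a u w|u v w|a u w|u] /=.
- rewrite (linD HA) !ipDl; ring.
- rewrite (linZ HA) !ipZl; ring.
- rewrite (linD HA) !ipDr; ring.
- rewrite (linZ HA) !ipZr; ring.
- by rewrite [ip u (A u)]ipC (ge0_real (Hpos u)) conjc_real subrr.
Qed.

Lemma Re_conj (z : R[i]) : complex.Re (conjc z) = complex.Re z.
Proof. by case: z. Qed.
Lemma cmod_real (r : R) : cmod (r%:C%C) = `|r|.
Proof. by rewrite /cmod /= expr0n addr0 sqrtr_sqr. Qed.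
Lemma unit_nsq x : hnorm ip x = 1 -> nsq x = 1.
Proof. by move=> h; rewrite -hnorm_sq h expr1n. Qed.

Section Main.
Variables (T Tadj A B : V -> V).
Hypotheses (Hnontriv : exists x : V, x <> 0)
    (HT : is_bounded_op ip T) (HTadj : is_bounded_op ip Tadj)
    (Hadj : is_adjoint ip T Tadj)
    (HA : is_pos_sqrt ip A (fun x => Tadj (T x)))
    (HB : is_pos_sqrt ip B (fun x => T (Tadj x))).

Let US := unit_sphere ip.

Lemma sphere_ne : exists x, US x.
Proof.
case: Hnontriv => x xn0.
have hp : 0 < hnorm ip x.
  rewrite lt_def hnorm_ge0 andbT; apply/eqP => h.
  by apply: xn0; apply: nsq_eq0; rewrite -hnorm_sq h expr2 mul0r.
exists ((hnorm ip x)^-1%:C%C *: x); rewrite /US /unit_sphere /=.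
by rewrite hnormZ cmod_real ger0_norm ?invr_ge0 ?ltW // mulVf // gt_eqF.
Qed.

Lemma bound_of X : is_bounded_op ip X -> exists M, 0 <= M /\ forall x, US x -> hnorm ip (X x) <= M.
Proof.
case=> _ [M HM]; case: sphere_ne => x0 ux0.
exists M; split.
  by apply: le_trans (hnorm_ge0 (X x0)) _; have := HM x0; rewrite ux0 mulr1.
by move=> x ux; have := HM x; rewrite ux mulr1.
Qed.

Lemma bounded_full X : is_bounded_op ip X ->
  exists M, 0 <= M /\ forall x, hnorm ip (X x) <= M * hnorm ip x.
Proof.
move=> hX; case: (hX) => _ [M HM]; case: sphere_ne => x0 ux0.
exists M; split => //.
by apply: le_trans (hnorm_ge0 (X x0)) _; have := HM x0; rewrite ux0 mulr1.
Qed.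

Let S := fun x => A (A x) + B (B x).
Let HAb := HA.1.1.
Let HBb := HB.1.1.

Lemma S_ub : has_ubound [set hnorm ip (S x) | x in US].
Proof.
case: (bounded_full HAb) => MA [MA0 hMA]; case: (bounded_full HBb) => MB [MB0 hMB].
exists (MA * MA + MB * MB) => _ [x ux <-].
apply: le_trans (hnormD _ _) _; apply: lerD.
  apply: le_trans (hMA _) _; apply: ler_wpM2l => //; by apply: le_trans (hMA _) _; rewrite ux mulr1.
apply: le_trans (hMB _) _; apply: ler_wpM2l => //; by apply: le_trans (hMB _) _; rewrite ux mulr1.
Qed.

Lemma T_le x : US x -> cmod (ip (T x) x) ^+ 2 <= opnorm ip S / 2.
Proof.
move=> ux; have n1 := unit_nsq ux.
have h1 : cmod (ip (T x) x) ^+ 2 <= complex.Re (ip (A (A x)) x).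
  apply: le_trans (cs _ _) _; rewrite n1 mulr1 /nsq Hadj HA.2 [ip x _]ipC Re_conj //.
have h2 : cmod (ip (T x) x) ^+ 2 <= complex.Re (ip (B (B x)) x).
  rewrite Hadj [ip x _]ipC cmod_conj.
  apply: le_trans (cs _ _) _; rewrite n1 mulr1 /nsq -Hadj HB.2 //.
have h3 : complex.Re (ip (S x) x) <= opnorm ip S.
  apply: le_trans (Re_le_cmod _) _; apply: le_trans (cs_h _ _) _.
  rewrite ux mulr1; apply: ub_le_sup; first exact: S_ub.
  by exists x.
rewrite /S ipDl ReD in h3.
rewrite ler_pdivlMr //; lra.
Qed.

Lemma numrad_le : numrad ip T ^+ 2 <= opnorm ip S / 2.
Proof.
case: sphere_ne => x0 ux0.
have b0 : 0 <= opnorm ip S / 2.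
  apply: le_trans (T_le ux0); exact: sqr_ge0.
have ub : ubound [set cmod (ip (T x) x) | x in US] (Num.sqrt (opnorm ip S / 2)).
  move=> _ [x ux <-]; rewrite -(ger0_norm (cmod_ge0 _)) -sqrtr_sqr.
  exact: ler_wsqrtr (T_le ux).
have ne : [set cmod (ip (T x) x) | x in US] !=set0 by exists (cmod (ip (T x0) x0)), x0.
have h1 := ge_sup ne ub.
have h0 : 0 <= numrad ip T.
  apply: le_trans (cmod_ge0 (ip (T x0) x0)) _.
  apply: ub_le_sup; first by exists (Num.sqrt (opnorm ip S / 2)).
  by exists x0.
rewrite -(sqr_sqrtr b0) ler_sqr ?nnegrE ?sqrtr_ge0 //.
Qed.

Let a x := complex.Re (ip (A x) x).
Let aset := [set a x | x in US].
Let sa := pos_selfadj HA.1.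
Let sb := pos_selfadj HB.1.

Lemma a_ge0 y : 0 <= a y.
Proof. have := HA.1.2 y; rewrite /a; case: (ip (A y) y) => ? ?; by rewrite lecE /= => /andP[]. Qed.
Lemma a_real y : ip (A y) y = (a y)%:C%C.
Proof. exact: ge0_real (HA.1.2 y). Qed.

Lemma a_ub : has_ubound aset.
Proof.
case: (bound_of HAb) => MA [MA0 hMA]; exists MA => _ [x ux <-].
apply: le_trans (Re_le_cmod _) _; apply: le_trans (cs_h _ _) _.
by rewrite ux mulr1; apply: hMA.
Qed.

Let M := sup aset.
Lemma a_le_M x : US x -> a x <= M.
Proof. move=> ux; apply: ub_le_sup; [exact: a_ub | by exists x]. Qed.
Lemma M_ge0 : 0 <= M.
Proof. case: sphere_ne => x0 ux0; exact: le_trans (a_ge0 x0) (a_le_M ux0). Qed.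

Lemma aZ c u : a (c *: u) = cmod c ^+ 2 * a u.
Proof. by rewrite /a (linZ HAb) ipZl ipZr mulrA mul_conj ReRM. Qed.

Lemma a_le_Mn y : a y <= M * nsq y.
Proof.
have [->|yn0] := eqVneq y 0.
  by rewrite /a (lin0 HAb) ip0r /nsq ip0r /= mulr0.
have hp : 0 < hnorm ip y.
  rewrite lt_def hnorm_ge0 andbT; apply/eqP => h.
  by move/eqP: yn0; apply; apply: nsq_eq0; rewrite -hnorm_sq h expr2 mul0r.
set h := hnorm ip y.
have hi0 : 0 <= h^-1 by rewrite invr_ge0 ltW.
have uu : US ((h^-1)%:C%C *: y).
  by rewrite /US /unit_sphere /= hnormZ cmod_real (ger0_norm hi0) mulVf // gt_eqF.
have := a_le_M uu; rewrite aZ cmod_real (ger0_norm hi0) => hh.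
have -> : a y = h ^+ 2 * ((h^-1) ^+ 2 * a y) by rewrite mulrA -exprMn mulfV ?gt_eqF // expr1n mul1r.
by rewrite -hnorm_sq -/h [M * _]mulrC ler_wpM2l // sqr_ge0.
Qed.

Lemma key x L : US x -> M < L -> nsq (A x) <= L * a x.
Proof.
move=> ux ML.
have L0 : 0 < L by apply: le_lt_trans M_ge0 ML.
set t := L^-1; set N := nsq (A x); set a2 := a (A x).
pose y := x - t%:C%C *: A x.
have E : ip (A y) y = (a x - 2 * t * N + t ^+ 2 * a2)%:C%C.
  rewrite /y (linB HAb) (linZ HAb) !ipBl !ipBr !ipZl !ipZr conjc_real.
  rewrite [ip (A (A x)) x]sa a_real ipxx (a_real (A x)) -/N -/a2.
  apply/eqP; rewrite eq_complex /=; apply/andP; split; apply/eqP; ring.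
have h0 : 0 <= a x - 2 * t * N + t ^+ 2 * a2.
  by have := a_ge0 y; rewrite /a E /=.
have h1 : a2 <= M * N by apply: a_le_Mn.
have N0 : 0 <= N by apply: nsq_ge0.
have h2 : M * N <= L * N by rewrite ler_wpM2r // ltW.
have e : L ^+ 2 * (a x - 2 * t * N + t ^+ 2 * a2) = L ^+ 2 * a x - 2 * L * N + a2.
  rewrite /t; field; by rewrite gt_eqF.
have h3 : 0 <= L * (L * a x - N).
  have := mulr_ge0 (sqr_ge0 L) h0; rewrite e => h4.
  have -> : L * (L * a x - N) = L ^+ 2 * a x - 2 * L * N + L * N by ring.
  lra.
by move: h3; rewrite pmulr_rge0 // subr_ge0.
Qed.

Let cset := [set cmod (ip (A (B x)) x - ip (A x) x * ip (B x) x) | x in US].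

Lemma inf_small e : 0 < e -> exists x, US x /\
  cmod (ip (A (B x)) x - ip (A x) x * ip (B x) x) <= e.
Proof.
move=> he.
case: (bound_of HBb) => MB [MB0 hMB].
have M0 := M_ge0.
pose D := 2 * (MB ^+ 2 + 1) * (M + 1).
have D0 : 0 < D by rewrite /D !mulr_gt0 // ?ltr_wpDl ?sqr_ge0 // ltr_wpDl.
pose eta := e ^+ 2 / D.
have eta0 : 0 < eta by rewrite /eta divr_gt0 // exprn_gt0.
have hs : has_sup aset.
  split; last exact: a_ub.
  by case: sphere_ne => x0 ux0; exists (a x0), x0.
case: (sup_adherent eta0 hs) => _ [x ux <-] hx.
exists x; split => //.
have n1 := unit_nsq ux.
set al := a x.
pose w := A x - al%:C%C *: x.
have hN := key ux (ltr_pwDr eta0 (lexx M)).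
have Ew : ip w w = (nsq (A x) - al ^+ 2)%:C%C.
  rewrite /w !ipBl !ipBr !ipZl !ipZr conjc_real [ip x (A x)]ipC a_real (ipxx x) n1 (ipxx (A x)) conjc_real.
  apply/eqP; rewrite eq_complex /=; apply/andP; split; apply/eqP; ring.
have nw : nsq w = nsq (A x) - al ^+ 2 by rewrite /nsq Ew.
have Ez : ip (A (B x)) x - ip (A x) x * ip (B x) x = ip (B x) w.
  by rewrite /w ipBr ipZr conjc_real sa a_real mulrC.
rewrite Ez.
have c1 := cs (B x) w.
have c2 : nsq (B x) <= MB ^+ 2.
  by rewrite -hnorm_sq ler_sqr ?nnegrE ?hnorm_ge0 // hMB.
have alM : al <= M by apply: a_le_M.
have al0 : 0 <= al by apply: a_ge0.
have c3 : nsq w <= 2 * eta * M.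
  rewrite nw.
  have : nsq (A x) - al ^+ 2 <= al * (M + eta - al) by rewrite mulrBr -expr2; lra.
  move=> h; apply: le_trans h _.
  have : M + eta - al <= 2 * eta by have hx2 : M - eta < al := hx; lra.
  move=> h'; apply: le_trans (ler_wpM2l al0 h') _.
  rewrite [2 * eta * M]mulrC ler_wpM2r //; lra.
have c4 : cmod (ip (B x) w) ^+ 2 <= MB ^+ 2 * (2 * eta * M).
  apply: le_trans c1 _; apply: ler_pM => //; [exact: nsq_ge0 | exact: nsq_ge0].
have c5 : MB ^+ 2 * (2 * eta * M) * D = e ^+ 2 * (MB ^+ 2 * M) * 2.
  rewrite /eta; field; by rewrite gt_eqF.
have c6 : MB ^+ 2 * M <= (MB ^+ 2 + 1) * (M + 1).
  have := sqr_ge0 MB; nra.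
have c7 : cmod (ip (B x) w) ^+ 2 <= e ^+ 2.
  apply: le_trans c4 _.
  rewrite -(ler_pM2r D0) c5 /D.
  have := sqr_ge0 e; have := sqr_ge0 MB; nra.
have e0 : 0 <= e := ltW he. by rewrite -ler_sqr ?nnegrE ?cmod_ge0.
Qed.


Lemma final : numrad ip T ^+ 2 + inf cset <= opnorm ip S / 2.
Proof.
have ilb : has_lbound cset by exists 0 => _ [x _ <-]; exact: cmod_ge0.
have I0 : inf cset <= 0.
  rewrite leNgt; apply/negP => hI.
  have [|x [ux hx]] := inf_small (e := inf cset / 2); first by rewrite divr_gt0.
  have : inf cset <= cmod (ip (A (B x)) x - ip (A x) x * ip (B x) x).
    by apply: (ge_inf ilb); exists x.
  lra.
have := numrad_le; lra.
Qed.

End Main.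
End Basics.

Theorem corollary4p2 (R : realType) (V : lmodType R[i]) (ip : V -> V -> R[i])
    (HH : is_hilbert ip) (Hnontriv : exists x : V, x <> 0)
    (T Tadj A B : V -> V)
    (HT : is_bounded_op ip T) (HTadj : is_bounded_op ip Tadj)
    (Hadj : is_adjoint ip T Tadj)
    (HA : is_pos_sqrt ip A (fun x => Tadj (T x)))
    (HB : is_pos_sqrt ip B (fun x => T (Tadj x))) :
  numrad ip T ^+ 2
    + inf [set cmod (ip (A (B x)) x - ip (A x) x * ip (B x) x)
           | x in unit_sphere ip]
  <= opnorm ip (fun x => A (A x) + B (B x)) / 2.
Proof.
exact: (final HH.1 Hnontriv Hadj HA HB).
Qed.
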